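(* Assume Assumption 1 (randomization), $0<P(Z=1\mid R=r)<1$, monotonicity ($S(1)\ge S(0)$ almost surely), and $P_{01r}>0$. Then $$\max\Big\{0,\frac{Q_{11r}P_{11r}-P_{11r}+P_{01r}}{P_{01r}}\Big\}-Q_{01r}\ \le\ ACE_{ss,r}\ \le\ \min\Big\{1,\frac{Q_{11r}P_{11r}}{P_{01r}}\Big\}-Q_{01r}.$$
   Context: A unit has trial $R$, treatment $Z\in\{0,1\}$, binary potential surrogate and endpoint $S(z),Y(z)$; observed $S=ZS(1)+(1-Z)S(0)$, $Y=ZY(1)+(1-Z)Y(0)$. $U=(S(1),S(0))$ with $ss=(1,1)$, $s\bar{s}=(1,0)$, $\bar{s}s=(0,1)$, $\bar{s}\bar{s}=(0,0)$; $ACE_{ur}=E\{Y(1)-Y(0)\mid U=u,R=r\}$. $P_{zsr}=P(S=s\mid Z=z,R=r)$, $Q_{zsr}=P(Y=1\mid Z=z,S=s,R=r)$. Assumption 1 (randomization): $Z\perp\!\!\!\perp\{S(1),S(0),Y(1),Y(0)\}\mid R$. Under these assumptions $P(U=ss\mid R=r)=P_{01r}$. *)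

(* Defs.v *)
From HB Require Import structures.
From mathcomp Require Import all_boot all_order all_algebra.
Set Implicit Arguments. Unset Strict Implicit. Unset Printing Implicit Defensive.
Import Order.TTheory GRing.Theory Num.Theory.
Local Open Scope ring_scope.

Definition Pr (F : realFieldType) (Om : finType) (p : Om -> F) (A : pred Om) : F :=
  \sum_(w | A w) p w.

Definition cPr (F : realFieldType) (Om : finType) (p : Om -> F) (A B : pred Om) : F :=
  Pr p (predI A B) / Pr p B.

Definition cE (F : realFieldType) (Om : finType) (p : Om -> F) (X : Om -> F) (B : pred Om) : F :=
  (\sum_(w | B w) p w * X w) / Pr p B.

Definition is_pmf (F : realFieldType) (Om : finType) (p : Om -> F) : Prop :=
  (forall w, 0 <= p w) /\ \sum_w p w = 1.

Definition cond_indep (F : realFieldType) (Om : finType) (p : Om -> F)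
  (T : eqType) (Rv : Om -> T) (Z : Om -> bool) (V : eqType) (X : Om -> V) : Prop :=
  forall (r : T) (z : bool) (v : V),
    Pr p (fun w => [&& Rv w == r, Z w == z & X w == v]) * Pr p (fun w => Rv w == r)
    = Pr p (fun w => (Rv w == r) && (Z w == z)) * Pr p (fun w => (Rv w == r) && (X w == v)).

Definition obs (Om : Type) (Z X1 X0 : Om -> bool) (w : Om) : bool :=
  if Z w then X1 w else X0 w.

Definition Pzsr (F : realFieldType) (Om : finType) (p : Om -> F) (T : eqType)
  (Rv : Om -> T) (Z S1 S0 : Om -> bool) (z s : bool) (r : T) : F :=
  cPr p (fun w => obs Z S1 S0 w == s) (fun w => (Z w == z) && (Rv w == r)).

Definition Qzsr (F : realFieldType) (Om : finType) (p : Om -> F) (T : eqType)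
  (Rv : Om -> T) (Z S1 S0 Y1 Y0 : Om -> bool) (z s : bool) (r : T) : F :=
  cPr p (fun w => obs Z Y1 Y0 w)
        (fun w => [&& Z w == z, obs Z S1 S0 w == s & Rv w == r]).

Definition ACE (F : realFieldType) (Om : finType) (p : Om -> F) (T : eqType)
  (Rv : Om -> T) (S1 S0 Y1 Y0 : Om -> bool) (u : bool * bool) (r : T) : F :=
  cE p (fun w => (Y1 w)%:R - (Y0 w)%:R)
       (fun w => ((S1 w, S0 w) == u) && (Rv w == r)).

(* Main.v *)
Require Import Defs.
From HB Require Import structures.
From mathcomp Require Import all_boot all_order all_algebra.
From mathcomp Require Import ring lra.
Import Order.TTheory GRing.Theory Num.Theory.
Local Open Scope ring_scope.

Module Helpers.
Set Implicit Arguments. Unset Strict Implicit.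

Lemma Pr_ext (F : realFieldType) (Om : finType) (p : Om -> F) (A A' : pred Om) :
  (forall w, A w = A' w) -> Pr p A = Pr p A'.
Proof. by move=> H; rewrite /Pr; apply: eq_bigl. Qed.

Lemma Pr_ext_pos (F : realFieldType) (Om : finType) (p : Om -> F) (A A' : pred Om) :
  (forall w, 0 <= p w) ->
  (forall w, 0 < p w -> A w = A' w) -> Pr p A = Pr p A'.
Proof.
move=> h0 H; rewrite /Pr big_mkcond [RHS]big_mkcond; apply: eq_bigr => w _.
have := h0 w; rewrite le0r => /orP [/eqP ->|/H ->]; last by [].
by case: (A w); case: (A' w).
Qed.

Lemma Pr_le (F : realFieldType) (Om : finType) (p : Om -> F) (A A' : pred Om) :
  (forall w, 0 <= p w) ->
  (forall w, A w -> A' w) -> Pr p A <= Pr p A'.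
Proof.
move=> h0 H; rewrite /Pr big_mkcond [X in _ <= X]big_mkcond; apply: ler_sum => w _.
have := H w; case: (A w); case: (A' w) => //=.
by move/(_ isT).
Qed.

Lemma Pr_ge0 (F : realFieldType) (Om : finType) (p : Om -> F) (A : pred Om) :
  (forall w, 0 <= p w) -> 0 <= Pr p A.
Proof. by move=> h0; rewrite /Pr; apply: sumr_ge0 => w _; exact: h0. Qed.

Lemma Pr_split (F : realFieldType) (Om : finType) (p : Om -> F) (A C : pred Om) :
  Pr p A = Pr p (fun w => A w && C w) + Pr p (fun w => A w && ~~ C w).
Proof. by rewrite /Pr (bigID C). Qed.

Lemma sum_ind (F : realFieldType) (Om : finType) (p : Om -> F) (A b : pred Om) :
  \sum_(w | A w) p w * (b w)%:R = Pr p (fun w => A w && b w).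
Proof.
rewrite /Pr big_mkcondr; apply: eq_bigr => w _.
by case: (b w); rewrite ?mulr1 ?mulr0.
Qed.

Lemma indepE (F : realFieldType) (Om : finType) (p : Om -> F)
  (T : eqType) (Rv : Om -> T) (Z S1 S0 Y1 Y0 : Om -> bool) (r : T)
  (randomization : cond_indep p Rv Z (fun w => (S1 w, S0 w, Y1 w, Y0 w)))
  (f : pred (bool * bool * bool * bool)) (z : bool) :
  Pr p (fun w => [&& Rv w == r, Z w == z & f (S1 w, S0 w, Y1 w, Y0 w)])
   * Pr p (fun w => Rv w == r)
  = Pr p (fun w => (Rv w == r) && (Z w == z))
   * Pr p (fun w => (Rv w == r) && f (S1 w, S0 w, Y1 w, Y0 w)).
Proof.
set V := fun w => (S1 w, S0 w, Y1 w, Y0 w).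
rewrite /Pr (partition_big V f) /=; last by move=> w /and3P [].
rewrite [X in _ = _ * X](partition_big V f) /=; last by move=> w /andP [].
rewrite mulr_suml mulr_sumr; apply: eq_bigr => v fv.
have := randomization r z v; rewrite /Pr.
have -> : \sum_(w | [&& Rv w == r, Z w == z & f (V w)] && (V w == v)) p w
   = \sum_(w | [&& Rv w == r, Z w == z & V w == v]) p w.
  apply: eq_bigl => w; case: (V w =P v) => [->|]; last by rewrite !andbF.
  by rewrite fv !andbT.
have -> : \sum_(w | ((Rv w == r) && f (V w)) && (V w == v)) p w
   = \sum_(w | (Rv w == r) && (V w == v)) p w.
  apply: eq_bigl => w; case: (V w =P v) => [->|]; last by rewrite !andbF.
  by rewrite fv !andbT.
by [].
Qed.
End Helpers.
Import Helpers.

Lemma final_ineq (F : realFieldType) (pb a s1 y1s y1ss y0ss e es : F) :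
  0 < pb -> 0 < a -> 0 <= y1ss -> y1ss <= a -> y1s = y1ss + e -> s1 = a + es ->
  0 <= e -> e <= es ->
  Num.max 0 ((y1s / s1 * (s1 / pb) - s1 / pb + a / pb) / (a / pb)) - y0ss / a
    <= (y1ss - y0ss) / a /\
  (y1ss - y0ss) / a <= Num.min 1 (y1s / s1 * (s1 / pb) / (a / pb)) - y0ss / a.
Proof.
move=> pb0 a0 y0 ya -> -> e0 ees.
have s0 : 0 < a + es by lra.
have -> : (y1ss + e) / (a + es) * ((a + es) / pb) - (a + es) / pb + a / pb
   = (y1ss + e - es) / pb.
  field; apply/andP; split; apply: lt0r_neq0 => //.
have -> : (y1ss + e - es) / pb / (a / pb) = (y1ss + e - es) / a.
  field; apply/andP; split; apply: lt0r_neq0 => //.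
have -> : (y1ss + e) / (a + es) * ((a + es) / pb) / (a / pb) = (y1ss + e) / a.
  field; apply/and3P; split; apply: lt0r_neq0 => //.
rewrite [(y1ss - y0ss) / a]mulrBl; split; rewrite lerD2r.
  have a0' : 0 <= a by exact: ltW.
  rewrite ge_max divr_ge0 //= ler_pM2r ?invr_gt0 //; lra.
rewrite le_min ler_pdivrMr // mul1r ya /= ler_pM2r ?invr_gt0 //; lra.
Qed.

Lemma L1 (F : realFieldType) (x s b : F) : x != 0 -> b != 0 -> x * s / b / x = s / b.
Proof. by move=> hx hb; field; rewrite hx hb. Qed.

Lemma L2 (F : realFieldType) (x u s b : F) : x != 0 -> b != 0 -> s != 0 ->
  x * u / b / (x * s / b) = u / s.
Proof. by move=> hx hb hs; field; rewrite hx hb hs. Qed.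

Ltac bsolve t1 t2 t3 t4 t5 t6 := rewrite ?/obs /=;
  move: t1 t2 t3 t4 t5 t6; by do 6 case.

Theorem propositionA2 (F : realFieldType) (Om : finType) (p : Om -> F)
  (T : eqType) (Rv : Om -> T) (Z S1 S0 Y1 Y0 : Om -> bool) (r : T)
  (pmf : is_pmf p)
  (randomization : cond_indep p Rv Z (fun w => (S1 w, S0 w, Y1 w, Y0 w)))
  (hZ0 : 0 < cPr p (fun w => Z w) (fun w => Rv w == r))
  (hZ1 : cPr p (fun w => Z w) (fun w => Rv w == r) < 1)
  (monotone : forall w, 0 < p w -> (S0 w ==> S1 w))
  (hP01 : 0 < Pzsr p Rv Z S1 S0 false true r) :
  let P11 := Pzsr p Rv Z S1 S0 true true r in
  let P01 := Pzsr p Rv Z S1 S0 false true r in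
  let Q11 := Qzsr p Rv Z S1 S0 Y1 Y0 true true r in
  let Q01 := Qzsr p Rv Z S1 S0 Y1 Y0 false true r in
  let ace := ACE p Rv S1 S0 Y1 Y0 (true, true) r in
  Num.max 0 ((Q11 * P11 - P11 + P01) / P01) - Q01 <= ace /\
  ace <= Num.min 1 (Q11 * P11 / P01) - Q01.
Proof.
move=> P11 P01 Q11 Q01 ace.
have h0 := pmf.1.
pose pb := Pr p (fun w => Rv w == r).
pose x1 := Pr p (fun w => (Rv w == r) && (Z w == true)).
pose x0 := Pr p (fun w => (Rv w == r) && (Z w == false)).
pose s1 := Pr p (fun w => (Rv w == r) && S1 w).
pose a := Pr p (fun w => (Rv w == r) && S0 w).
pose y1s := Pr p (fun w => (Rv w == r) && (S1 w && Y1 w)).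
pose y1a := Pr p (fun w => (Rv w == r) && (S0 w && Y1 w)).
pose y0a := Pr p (fun w => (Rv w == r) && (S0 w && Y0 w)).
pose e := Pr p (fun w => (Rv w == r) && (S1 w && Y1 w) && ~~ S0 w).
pose es := Pr p (fun w => (Rv w == r) && S1 w && ~~ S0 w).
have hx1pb : cPr p (fun w => Z w) (fun w => Rv w == r) = x1 / pb.
  rewrite /cPr; congr (_ / _); apply: Pr_ext => w /=.
  by rewrite andbC; case: (Z w).
have hpb : pb != 0.
  apply/eqP => hp; move: hZ0; rewrite hx1pb hp invr0 mulr0; by rewrite ltxx.
have hx1 : x1 != 0.
  apply/eqP => hp; move: hZ0; rewrite hx1pb hp mul0r; by rewrite ltxx.
have IE (A G : pred Om) (f : pred (bool * bool * bool * bool)) (z : bool) :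
   (forall w, A w = [&& Rv w == r, Z w == z & f (S1 w, S0 w, Y1 w, Y0 w)]) ->
   (forall w, G w = (Rv w == r) && f (S1 w, S0 w, Y1 w, Y0 w)) ->
   Pr p A = Pr p (fun w => (Rv w == r) && (Z w == z)) * Pr p G / pb.
  move=> HA HG; rewrite (Pr_ext p HA) (Pr_ext p HG).
  by rewrite -(@indepE F Om p T Rv Z S1 S0 Y1 Y0 r randomization f z) mulfK.
have Bz (z : bool) : Pr p (fun w => (Z w == z) && (Rv w == r))
    = Pr p (fun w => (Rv w == r) && (Z w == z)).
  by apply: Pr_ext => w; rewrite andbC.
have eP01' : P01 = x0 * a / pb / x0.
  rewrite /P01 /Pzsr /cPr Bz; congr (_ / _).
  apply: (IE _ _ (fun v => v.1.1.2)) => w //=.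
  bsolve (Z w) (Rv w == r) (S0 w) (S1 w) (Y1 w) (Y0 w).
have hx0 : x0 != 0.
  apply/eqP => hp; move: hP01; rewrite -/P01 eP01' hp invr0 mulr0; by rewrite ltxx.
have eP01 : P01 = a / pb by rewrite eP01'; field; apply/andP; split.
have pb0 : 0 < pb by rewrite lt0r hpb; exact: Pr_ge0.
have a0 : 0 < a.
  rewrite lt0r Pr_ge0 // andbT; apply/eqP => ha.
  by move: hP01; rewrite -/P01 eP01 ha mul0r ltxx.
have eP11 : P11 = s1 / pb.
  rewrite /P11 /Pzsr /cPr Bz.
  rewrite (IE _ (fun w => (Rv w == r) && S1 w) (fun v => v.1.1.1) true); last by move=> w.
    rewrite -/x1 -/s1; exact: L1.
  move=> w; bsolve (Z w) (Rv w == r) (S0 w) (S1 w) (Y1 w) (Y0 w).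
have es_a : s1 = a + es.
  rewrite /s1 (Pr_split _ _ S0); congr (_ + _).
  apply: (Pr_ext_pos h0) => w /monotone.
  bsolve (Z w) (Rv w == r) (S0 w) (S1 w) (Y1 w) (Y0 w).
have es0 : 0 <= es by exact: Pr_ge0.
have s10 : s1 != 0 by rewrite es_a; apply: lt0r_neq0; lra.
have eQ11 : Q11 = y1s / s1.
  rewrite /Q11 /Qzsr /cPr.
  rewrite (IE _ (fun w => [&& Rv w == r, S1 w & Y1 w]) (fun v => v.1.1.1 && v.1.2) true); last by move=> w.
    rewrite [X in _ / X](IE _ (fun w => (Rv w == r) && S1 w) (fun v => v.1.1.1) true); last by move=> w.
      rewrite -/x1 -/s1 -/y1s; exact: L2.
    move=> w; bsolve (Z w) (Rv w == r) (S0 w) (S1 w) (Y1 w) (Y0 w).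
  move=> w; bsolve (Z w) (Rv w == r) (S0 w) (S1 w) (Y1 w) (Y0 w).
have eQ01 : Q01 = y0a / a.
  rewrite /Q01 /Qzsr /cPr.
  rewrite (IE _ (fun w => [&& Rv w == r, S0 w & Y0 w]) (fun v => v.1.1.2 && v.2) false); last by move=> w.
    rewrite [X in _ / X](IE _ (fun w => (Rv w == r) && S0 w) (fun v => v.1.1.2) false); last by move=> w.
      rewrite -/x0 -/a -/y0a; apply: L2 => //; exact: lt0r_neq0.
    move=> w; bsolve (Z w) (Rv w == r) (S0 w) (S1 w) (Y1 w) (Y0 w).
  move=> w; bsolve (Z w) (Rv w == r) (S0 w) (S1 w) (Y1 w) (Y0 w).
have eace : ace = (y1a - y0a) / a.
  rewrite /ace /ACE /cE.
  under eq_bigr => w _ do rewrite mulrBr.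
  rewrite sumrB !sum_ind; congr ((_ - _) / _); apply: (Pr_ext_pos h0) => w /monotone;
  bsolve (Z w) (Rv w == r) (S0 w) (S1 w) (Y1 w) (Y0 w).
have ey : y1s = y1a + e.
  rewrite /y1s (Pr_split _ _ S0); congr (_ + _).
  apply: (Pr_ext_pos h0) => w /monotone.
  bsolve (Z w) (Rv w == r) (S0 w) (S1 w) (Y1 w) (Y0 w).
have e0 : 0 <= e by exact: Pr_ge0.
have ees : e <= es.
  apply: (Pr_le h0) => w; bsolve (Z w) (Rv w == r) (S0 w) (S1 w) (Y1 w) (Y0 w).
have y0 : 0 <= y1a by exact: Pr_ge0.
have ya : y1a <= a.
  apply: (Pr_le h0) => w; bsolve (Z w) (Rv w == r) (S0 w) (S1 w) (Y1 w) (Y0 w).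
rewrite eP11 eP01 eQ11 eQ01 eace.
exact: (@final_ineq F pb a s1 y1s y1a y0a e es pb0 a0 y0 ya ey es_a e0 ees).
Qed.
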